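(* Let $F$ be a positive integer and $S$ an irreducible numerical semigroup with Frobenius number $F$. Define $S_0=S$ and, for $n\ge 0$, $S_{n+1}=(S_n\setminus\{\mathrm{m}(S_n)\})\cup\{F-\mathrm{m}(S_n)\}$ if $\mathrm{m}(S_n)<\frac{F}{2}$, and $S_{n+1}=S_n$ otherwise. Then every $S_n$ is an irreducible numerical semigroup with Frobenius number $F$, and if $k=\#\{s\in S: s<\frac{F}{2}\}-1$, then $S_{k+n}=\mathrm{C}(F)$ for all $n\in\mathbb{N}$.
   Context: A numerical semigroup is a subset $S\subseteq\mathbb{N}$ (with $\mathbb{N}$ the set of nonnegative integers) closed under addition, containing $0$, with $\mathbb{N}\setminus S$ finite. Its Frobenius number is the largest integer not in $S$; its multiplicity $\mathrm{m}(S)$ is the smallest positive integer in $S$. A numerical semigroup is irreducible if it cannot be expressed as the intersection of two numerical semigroups properly containing it. For a positive integer $F$, $\mathrm{C}(F)=\{0\}\cup\{z\in\mathbb{Z}: z\ge \lceil\frac{F+1}{2}\rceil\}\setminus\{F\}$ (i.e. $\{0\}\cup\{z\ge\frac{F+1}{2}\}\setminus\{F\}$ for $F$ odd and $\{0\}\cup\{z\ge \frac F2+1\}\setminus\{F\}$ for $F$ even). *)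

(* Defs.v *)
From Stdlib Require Import ClassicalEpsilon.
From mathcomp Require Import all_boot.
Set Implicit Arguments. Unset Strict Implicit. Unset Printing Implicit Defensive.

Definition is_numsg (S : pred nat) : Prop :=
  [/\ S 0, (forall x y, S x -> S y -> S (x + y)) & exists N, forall n, N <= n -> S n].

Definition frobenius_of (S : pred nat) (F : nat) : Prop :=
  ~~ S F /\ (forall n, F < n -> S n).

Definition proper_supset (T S : pred nat) : Prop :=
  (forall x, S x -> T x) /\ exists x, T x && ~~ S x.

Definition irreducible_numsg (S : pred nat) : Prop :=
  is_numsg S /\
  ~ (exists T1 T2 : pred nat,
        [/\ is_numsg T1, is_numsg T2, proper_supset T1 S, proper_supset T2 S
          & forall x, S x = T1 x && T2 x]).

(* multiplicity: the smallest positive element of S (0 if there is none, a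
   case that never occurs for numerical semigroups). *)
Definition mult (S : pred nat) : nat :=
  match excluded_middle_informative (exists n, (0 < n) && S n) with
  | left H => ex_minn H
  | right _ => 0
  end.

Definition step (F : nat) (S : pred nat) : pred nat :=
  if 2 * mult S < F then
    fun x => (S x && (x != mult S)) || (x == F - mult S)
  else S.

Definition seqS (F : nat) (S : pred nat) (n : nat) : pred nat := iter n (step F) S.

(* C(F) = {0} u {z >= ceil((F+1)/2)} \ {F} ; ceil((F+1)/2) = (F+2)./2 *)
Definition CF (F : nat) : pred nat :=
  fun z => (z == 0) || (((F + 2)./2 <= z) && (z != F)).

Definition count_small (F : nat) (S : pred nat) : nat :=
  count (fun s => S s && (2 * s < F)) (iota 0 F).

(* Main.v *)
Require Import Defs.
From Stdlib Require Import Lia ClassicalEpsilon.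
From mathcomp Require Import all_boot.

Ltac tolia := repeat match goal with
  | H : is_true (_ <= _) |- _ => move/leP: H => H
  | H : is_true (_ < _) |- _ => move/ltP: H => H
  | H : is_true (_ == _) |- _ => move/eqnP: H => H
  | H : is_true (_ != _) |- _ => move/eqnP: H => H
  | H : is_true (~~ (_ <= _)) |- _ => rewrite -ltnNge in H
  | H : is_true (~~ (_ < _)) |- _ => rewrite -leqNgt in H
  | |- is_true (~~ (_ <= _)) => rewrite -ltnNge
  | |- is_true (~~ (_ < _)) => rewrite -leqNgt
  | |- is_true (_ <= _) => apply/leP
  | |- is_true (_ < _) => apply/ltP
  | |- is_true (_ == _) => apply/eqnP
  | |- is_true (_ != _) => apply/eqnP
  end; unfold addn, subn, muln in *; lia.

Lemma multP S : is_numsg S ->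
  [/\ 0 < mult S, S (mult S) & forall n, 0 < n -> S n -> mult S <= n].
Proof.
case=> S0 Sadd [N HN].
have ex: exists n, (0 < n) && S n by exists N.+1; rewrite HN // leqnSn.
rewrite /mult; case: excluded_middle_informative => [H|nH]; last by case: nH.
case: ex_minnP => m /andP[m0 Sm] Hmin; split=> // n n0 Sn; apply: Hmin.
by rewrite n0 Sn.
Qed.

Definition symP (F : nat) (S : pred nat) :=
  forall x, x <= F -> 2 * x != F -> S x || S (F - x).

Definition inv F S := [/\ is_numsg S, frobenius_of S F & symP F S].

Lemma sym_irr F S : 0 < F -> inv F S -> irreducible_numsg S.
Proof.
move=> F0 [NS [SF Sgt] SP]; split=> // [[T1 [T2 [N1 N2 [P1 [x1 Hx1]] [P2 [x2 Hx2]] HI]]]].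
have key : forall T, is_numsg T -> (forall x, S x -> T x) -> forall x, T x && ~~ S x -> T F.
  move=> T [T0 Tadd _] sub x /andP[Tx Sx].
  have xF : x <= F by rewrite leqNgt; apply/negP=> /Sgt; apply/negP.
  case: (altP (2 * x =P F)) => h2.
    by rewrite -h2 mul2n -addnn; apply: Tadd.
  move: (SP x xF h2); rewrite (negbTE Sx) /= => SFx.
  have -> : F = x + (F - x) by rewrite subnKC.
  by apply: Tadd => //; apply: sub.
move: (HI F); rewrite (key _ N1 P1 _ Hx1) (key _ N2 P2 _ Hx2).
by rewrite (negbTE SF).
Qed.

Lemma irr_sym F S : irreducible_numsg S -> frobenius_of S F -> symP F S.
Proof.
move=> [NS Nirr] [SF Sgt]; have [S0 Sadd [N HN]] := NS.
move=> x0 x0F h0; apply/negPn/negP; rewrite negb_or => /andP[nx0 nFx0].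
pose G y := [&& y <= F, ~~ S y, ~~ S (F - y) & 2 * y != F].
have exG : exists y, G y by exists x0; rewrite /G x0F nx0 nFx0 h0.
have bG : forall y, G y -> y <= F by move=> y /and4P[].
case: (ex_maxnP exG bG) => h /and4P[hF nSh nSFh h2] hmax.
have Fh_in : G (F - h).
  by rewrite /G leq_subr nSFh subKn // nSh /=; tolia.
have hgt : F < 2 * h by move: (hmax _ Fh_in) => ?; tolia.
have hneF : h != F by apply/eqP=> e; move: nSFh; rewrite e subnn S0.
have Shs : forall s, 0 < s -> S s -> S (h + s).
  move=> s s0 Ss; apply/negPn/negP=> nS.
  have hsF : h + s <= F by rewrite leqNgt; apply/negP=> /Sgt; apply/negP.
  have : G (h + s).
    rewrite /G hsF nS /=; apply/andP; split; last by tolia.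
    apply/negP=> SF'; move: nSFh; have -> : F - h = (F - (h+s)) + s by tolia.
    by rewrite Sadd.
  by move/hmax => ?; tolia.
apply: Nirr; exists (fun z => S z || (z == h)), (fun z => S z || (z == F)); split.
- split; first by rewrite S0.
  + move=> a b /orP[Sa|/eqP->] /orP[Sb|/eqP->].
    * by rewrite Sadd.
    * case: (posnP a) => [->|a0]; first by rewrite add0n eqxx orbT.
      by rewrite addnC Shs.
    * case: (posnP b) => [->|b0]; first by rewrite addn0 eqxx orbT.
      by rewrite Shs.
    * by rewrite Sgt //; tolia.
  + by exists N => n /HN ->.
- split; first by rewrite S0.
  + move=> a b /orP[Sa|/eqP->] /orP[Sb|/eqP->].
    * by rewrite Sadd.
    * case: (posnP a) => [->|a0]; first by rewrite add0n eqxx orbT.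
      by rewrite Sgt //; tolia.
    * case: (posnP b) => [->|b0]; first by rewrite addn0 eqxx orbT.
      by rewrite Sgt //; tolia.
    * by rewrite Sgt //; tolia.
  + by exists N => n /HN ->.
- by split=> [x ->|]; last by exists h; rewrite eqxx orbT nSh.
- by split=> [x ->|]; last by exists F; rewrite eqxx orbT SF.
- move=> x; case Sx: (S x) => //=.
  by case: eqP => // ->; rewrite (negbTE hneF).
Qed.

Lemma count_rm (p : pred nat) m s : uniq s -> m \in s -> p m ->
  count p s = (count (fun x => p x && (x != m)) s).+1.
Proof.
elim: s => //= a s IH /andP[ans us]; rewrite in_cons => /orP[/eqP am|ms] pm.
  subst a.
  rewrite pm eqxx andbF add0n add1n; congr (_.+1); apply: eq_in_count => x xs /=.
  have -> : (x != m) by apply/eqP=> e; rewrite -e xs in ans.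
  by rewrite andbT.
have -> : (a != m) by apply/eqP=> e; rewrite e ms in ans.
by rewrite andbT IH // addnS.
Qed.

Lemma step_lt F S : inv F S -> 2 * mult S < F ->
  inv F (step F S) /\ count_small F S = (count_small F (step F S)).+1.
Proof.
move=> [NS [SF Sgt] SP] lt; have [S0 Sadd [N HN]] := NS.
have [m0 Sm mmin] := multP _ NS.
rewrite /step lt; set m := mult S in m0 Sm mmin lt *.
have mFm : ~~ S (F - m).
  apply/negP=> h; move: SF; rewrite -(subnK (ltnW (leq_ltn_trans (leq_pmull _ _) lt))) //.
  by rewrite Sadd.
have mlt : forall b, S b -> b != m -> 0 < b -> m < b.
  by move=> b Sb bm b0; move: (mmin b b0 Sb) => ?; tolia.
split; last first.
  rewrite /count_small (@count_rm _ m); last first.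
  - by rewrite Sm lt.
  - by rewrite mem_iota /=; tolia.
  - exact: iota_uniq.
  congr (_.+1); apply: eq_count => x /=.
  case: (eqVneq x (F - m)) => [->|h].
    have -> : (2 * (F - m) < F) = false by apply/negbTE; tolia.
    by rewrite !andbF ?andFb.
  by rewrite orbF; case: (S x); case: (x != m); case: (2 * x < F).
split.
- split; first by apply/orP; left; rewrite S0 /=; tolia.
  + move=> a b /orP[/andP[Sa am]|/eqP->] /orP[/andP[Sb bm]|/eqP->].
    * case: (posnP a) => [->|a0]; first by rewrite add0n Sb bm.
      case: (posnP b) => [->|b0]; first by rewrite addn0 Sa am.
      move: (mlt _ Sa am a0) (mlt _ Sb bm b0) => h1 h2.
      by apply/orP; left; apply/andP; split; [apply: Sadd | tolia].
    * case: (posnP a) => [->|a0]; first by rewrite add0n eqxx orbT.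
      move: (mlt _ Sa am a0) => h1.
      by apply/orP; left; apply/andP; split; [apply: Sgt; tolia | tolia].
    * case: (posnP b) => [->|b0]; first by rewrite addn0 eqxx orbT.
      move: (mlt _ Sb bm b0) => h1.
      by apply/orP; left; apply/andP; split; [apply: Sgt; tolia | tolia].
    * by apply/orP; left; apply/andP; split; [apply: Sgt; tolia | tolia].
  + by exists F.+1 => n hn; apply/orP; left; apply/andP; split; [apply: Sgt; tolia | tolia].
- split.
  + by rewrite (negbTE SF) /=; tolia.
  + by move=> n hn; apply/orP; left; apply/andP; split; [apply: Sgt; tolia | tolia].
- move=> x xF x2.
  case: (eqVneq x m) => [->|xm]; first by rewrite /= eqxx !orbT.
  case: (eqVneq x (F - m)) => [->|xFm]; first by rewrite /= !orbT.
  have e1 : (F - x != m) by tolia.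
  have e2 : (F - x == F - m) = false by apply/negbTE; tolia.
  by rewrite /= e1 e2 !andbT !orbF; apply: SP.
Qed.

Lemma CF_eq F S : inv F S -> F <= 2 * mult S -> S =1 CF F.
Proof.
move=> [NS [SF Sgt] SP] ge; have [S0 Sadd [N HN]] := NS.
have [m0 Sm mmin] := multP _ NS.
move=> x; rewrite /CF; case: (posnP x) => [->|x0]; first by rewrite S0.
rewrite leq_half_double -mul2n /=.
apply/idP/idP.
- move=> Sx; move: (mmin x x0 Sx) => h1.
  have xF : x != F by apply/eqP=> e; rewrite -e Sx in SF.
  have x2 : 2 * x != F.
    by apply/eqnP=> e; move: SF; rewrite -e mul2n -addnn Sadd.
  by apply/andP; split; tolia.
- move=> /andP[h1 h2]; case: (ltnP F x) => [lt|le]; first by rewrite Sgt.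
  have x2 : 2 * x != F by tolia.
  case/orP: (SP x le x2) => // SFx.
  have : 0 < F - x by tolia.
  move=> p; move: (mmin _ p SFx) => ?; exfalso; tolia.
Qed.

Lemma step_ge F S : F <= 2 * mult S -> step F S = S.
Proof. by move=> ge; rewrite /step ltnNge ge. Qed.

Lemma seq_fix F S : F <= 2 * mult S -> forall n, seqS F S n = S.
Proof. by move=> ge; elim=> // n IH; rewrite /seqS iterS -/(seqS F S n) IH step_ge. Qed.

Lemma inv_iter F S : inv F S -> forall n, inv F (seqS F S n).
Proof.
move=> IS; elim=> // n IH; rewrite /seqS iterS -/(seqS F S n).
case: (ltnP (2 * mult (seqS F S n)) F) => [lt|ge].
  by case: (step_lt _ _ IH lt).
by rewrite step_ge.
Qed.

Lemma count_pos F S : 0 < F -> inv F S -> 0 < count_small F S.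
Proof.
move=> F0 [[S0 _ _] _ _]; rewrite /count_small -has_count; apply/hasP.
by exists 0; rewrite ?mem_iota /= ?S0 ?muln0.
Qed.

Lemma conv F S : 0 < F -> inv F S -> forall n, count_small F S - 1 <= n ->
  seqS F S n =1 CF F.
Proof.
move=> F0 IS n; elim: n S IS => [|n IH] S IS hc.
  case: (ltnP (2 * mult S) F) => [lt|ge]; last by rewrite seq_fix //; apply: CF_eq.
  case: (step_lt _ _ IS lt) => IS' ce.
  have := count_pos _ _ F0 IS'; move: hc; rewrite ce => ? ?; exfalso; tolia.
case: (ltnP (2 * mult S) F) => [lt|ge]; last by rewrite seq_fix //; apply: CF_eq.
case: (step_lt _ _ IS lt) => IS' ce.
rewrite /seqS iterSr; apply: IH => //; move: hc; rewrite ce => ?; tolia.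
Qed.

Theorem mainTheorem4 (F : nat) (S : pred nat) :
  0 < F -> irreducible_numsg S -> frobenius_of S F ->
  (forall n, irreducible_numsg (seqS F S n) /\ frobenius_of (seqS F S n) F) /\
  (forall n, seqS F S ((count_small F S - 1) + n) =1 CF F).
Proof.
move=> F0 Irr Fr.
have IS : inv F S by split; [exact: (proj1 Irr) | exact: Fr | exact: irr_sym].
split.
  move=> n; have [NS' Fr' SP'] := inv_iter _ _ IS n; split => //.
  exact: (sym_irr _ _ F0 (inv_iter _ _ IS n)).
by move=> n; apply: conv => //; apply: leq_addr.
Qed.
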